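(* Let $A$ be a vertex of a phylogenetic quiver $\mathcal O$, let $B$ be a vertex of the clade $\mathcal O_A$, and set $m=h(A)$, $n=h(B)$ (so $n\ge m$). If $p^{n-m}([B])=[A]$, then $B$ is a phylogenetic vertex of $\mathcal O_A$ and $h_A(B)=n-m$.
   Context: A quiver consists of a class of vertices and, for each ordered pair of vertices $(A,B)$, a set of edges $A\to B$ (loops and multiple edges allowed). An evolution of length $m\ge 0$ is a sequence $A_0\leftarrow A_1\leftarrow\cdots\leftarrow A_m$ of vertices together with edges $A_k\to A_{k-1}$ ($1\le k\le m$); $A_0$ is its initial and $A_m$ its terminal vertex. Write $A\le B$ ($A$ is an ancestor of $B$, $B$ a descendant of $A$) if there is an evolution with initial vertex $A$ and terminal vertex $B$; $A,B$ are isotypic ($A\sim B$) if $A\le B$ and $B\le A$. A vertex $A$ is primitive if every ancestor of $A$ is isotypic to $A$. A full evolution for $X$ is an evolution with primitive initial vertex and terminal vertex $X$. The height $h(X)$ is the smallest length of a full evolution for $X$ ($\infty$ if none). An evolution $\alpha=(A_0\leftarrow\cdots\leftarrow A_m)$ embeds in $\beta=(B_0\leftarrow\cdots\leftarrow B_n)$ if $m\le n$ and there are $0\le r_0<\cdots<r_m\le n$ with $A_k\sim B_{r_k}$. A universal evolution for $X$ is a full evolution for $X$ embedding in every full evolution for $X$; $X$ is phylogenetic if one exists. A quiver is monotonous if $h(A)\ge h(B)$ for every edge $A\to B$; small if its isotypy classes form a set; phylogenetic if small, monotonous, and all vertices phylogenetic. For a phylogenetic quiver, $[A]$ denotes the isotypy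 class of $A$, $\mathcal O_m$ the set of isotypy classes of vertices of height $m$, and for $m\ge1$ the parental map $p:\mathcal O_m\to\mathcal O_{m-1}$ is $p([A])=[A_{m-1}]$ where $A_0\leftarrow\cdots\leftarrow A_{m-1}\leftarrow A_m=A$ is any universal evolution for $A$ (well defined); $p^0$ is the identity. The clade $\mathcal O_A$ is the quiver formed by all descendants of $A$ in $\mathcal O$ and all edges between them; $h_A$ denotes height computed in $\mathcal O_A$, and phylogeneticity in $\mathcal O_A$ is likewise computed within $\mathcal O_A$. *)

(* Defs.v *)
From Stdlib Require Import Arith.

Record quiver := Quiver {
  vert : Type;
  (* edge A B : there is at least one edge A -> B *)
  edge : vert -> vert -> Prop
}.

Section Q.
Variable Q : quiver.

Definition evolution (m : nat) (f : nat -> vert Q) : Prop :=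
  forall k, 1 <= k <= m -> edge Q (f k) (f (k - 1)).

Definition ancestor (A B : vert Q) : Prop :=
  exists m f, evolution m f /\ f 0 = A /\ f m = B.

Definition isotypic (A B : vert Q) : Prop := ancestor A B /\ ancestor B A.

Definition primitive (A : vert Q) : Prop :=
  forall B, ancestor B A -> isotypic B A.

Definition full_evolution (X : vert Q) (m : nat) (f : nat -> vert Q) : Prop :=
  evolution m f /\ primitive (f 0) /\ f m = X.

(* has_height X n : h(X) = n (finite). h(X) = infinity iff no n satisfies it. *)
Definition has_height (X : vert Q) (n : nat) : Prop :=
  (exists f, full_evolution X n f) /\
  (forall m f, full_evolution X m f -> n <= m).

Definition embeds (m : nat) (f : nat -> vert Q) (n : nat) (g : nat -> vert Q) : Prop :=
  m <= n /\
  exists r : nat -> nat,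
    (forall k, k < m -> r k < r (S k)) /\ r m <= n /\
    (forall k, k <= m -> isotypic (f k) (g (r k))).

Definition universal_evolution (X : vert Q) (m : nat) (f : nat -> vert Q) : Prop :=
  full_evolution X m f /\
  (forall n g, full_evolution X n g -> embeds m f n g).

Definition phylogenetic_vertex (X : vert Q) : Prop :=
  exists m f, universal_evolution X m f.

(* h(A) >= h(B), with the convention that infinity is the largest value *)
Definition height_ge (A B : vert Q) : Prop :=
  forall n, has_height A n -> exists m, has_height B m /\ m <= n.

Definition monotonous : Prop :=
  forall A B, edge Q A B -> height_ge A B.

(* Smallness is automatic in type theory (vertices form a type). *)
Definition phylogenetic_quiver : Prop :=
  monotonous /\ forall X, phylogenetic_vertex X.

(* parent B D : p([B]) = [D], via a universal evolution of B of length >= 1 *)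
Definition parent (B D : vert Q) : Prop :=
  exists l f, universal_evolution B l f /\ 1 <= l /\ isotypic (f (l - 1)) D.

Fixpoint parent_iter (k : nat) (B C : vert Q) : Prop :=
  match k with
  | 0 => isotypic B C
  | S k' => exists D, parent B D /\ parent_iter k' D C
  end.

End Q.

Definition clade (Q : quiver) (A : vert Q) : quiver :=
  {| vert := { B : vert Q | ancestor Q A B };
     edge := fun x y => edge Q (proj1_sig x) (proj1_sig y) |}.

(* Main.v *)
Require Import Defs.
From Stdlib Require Import Arith Lia ProofIrrelevance.

Definition cat {Q : quiver} (m1 : nat) (a b : nat -> vert Q) : nat -> vert Q :=
  fun k => if k <=? m1 then a k else b (k - m1).

Lemma cat_evol {Q : quiver} m1 m2 (a b : nat -> vert Q) : evolution Q m1 a -> evolution Q m2 b -> a m1 = b 0 ->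
  evolution Q (m1 + m2) (cat m1 a b).
Proof.
  intros Ha Hb Hab k Hk. unfold cat.
  destruct (Nat.leb_spec k m1).
  - destruct (Nat.leb_spec (k-1) m1); [|lia]. apply Ha. lia.
  - destruct (Nat.leb_spec (k-1) m1).
    + assert (k = S m1) by lia. subst k. replace (S m1 - m1) with 1 by lia.
      replace (S m1 - 1) with m1 by lia. rewrite Hab. apply (Hb 1). lia.
    + replace (k - 1 - m1) with (k - m1 - 1) by lia. apply Hb. lia.
Qed.

Lemma cat_0 {Q : quiver} m1 (a b : nat -> vert Q) : cat m1 a b 0 = a 0.
Proof. reflexivity. Qed.

Lemma cat_hi {Q : quiver} m1 (a b : nat -> vert Q) k : a m1 = b 0 -> m1 <= k -> cat m1 a b k = b (k - m1).
Proof.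
  intros Hab Hk. unfold cat. destruct (Nat.leb_spec k m1).
  - assert (k = m1) by lia. subst. rewrite Nat.sub_diag. exact Hab.
  - reflexivity.
Qed.

Lemma cat_lo {Q : quiver} m1 (a b : nat -> vert Q) k : k <= m1 -> cat m1 a b k = a k.
Proof. intros Hk. unfold cat. destruct (Nat.leb_spec k m1); [reflexivity| lia]. Qed.

Lemma shift_evol {Q : quiver} M (f : nat -> vert Q) i j : evolution Q M f -> i <= j <= M ->
  evolution Q (j - i) (fun k => f (i + k)).
Proof. intros H Hij k Hk. cbv beta. replace (i + (k-1)) with (i + k - 1) by lia. apply H. lia. Qed.

Lemma prefix_evol {Q : quiver} M (f : nat -> vert Q) i : evolution Q M f -> i <= M -> evolution Q i f.
Proof. intros H Hi k Hk; apply H; lia. Qed.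

Lemma anc_refl {Q : quiver} (X : vert Q) : ancestor Q X X.
Proof. exists 0, (fun _ => X). split; [intros k Hk; lia| auto]. Qed.

Lemma anc_trans {Q : quiver} (X Y Z : vert Q) : ancestor Q X Y -> ancestor Q Y Z -> ancestor Q X Z.
Proof.
  intros [m1 [a [Ha [Ha0 Ham]]]] [m2 [b [Hb [Hb0 Hbm]]]].
  exists (m1+m2), (cat m1 a b). split; [apply cat_evol; auto; congruence|]. split.
  - rewrite cat_0; auto.
  - rewrite cat_hi; [| congruence | lia]. replace (m1+m2-m1) with m2 by lia; auto.
Qed.

Lemma anc_within {Q : quiver} M (f : nat -> vert Q) i j : evolution Q M f -> i <= j <= M -> ancestor Q (f i) (f j).
Proof.
  intros H Hij. exists (j-i), (fun k => f (i+k)). split; [apply (shift_evol M); auto|].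
  split; f_equal; lia.
Qed.

Lemma iso_refl {Q : quiver} (X : vert Q) : isotypic Q X X.
Proof. split; apply anc_refl. Qed.
Lemma iso_sym {Q : quiver} (X Y : vert Q) : isotypic Q X Y -> isotypic Q Y X.
Proof. intros [a b]; split; auto. Qed.
Lemma iso_trans {Q : quiver} (X Y Z : vert Q) : isotypic Q X Y -> isotypic Q Y Z -> isotypic Q X Z.
Proof. intros [a b] [c d]; split; eapply anc_trans; eauto. Qed.

Lemma hh_uniq {Q : quiver} (X : vert Q) a b : has_height Q X a -> has_height Q X b -> a = b.
Proof.
  intros [[f Hf] Ha] [[g Hg] Hb]. specialize (Ha _ _ Hg). specialize (Hb _ _ Hf). lia.
Qed.

Lemma hg_refl {Q : quiver} (X : vert Q) : height_ge Q X X.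
Proof. intros n H; exists n; split; auto. Qed.

Lemma hg_trans {Q : quiver} (X Y Z : vert Q) : height_ge Q X Y -> height_ge Q Y Z -> height_ge Q X Z.
Proof.
  intros H1 H2 n Hn. destruct (H1 n Hn) as [m [Hm Hle]]. destruct (H2 m Hm) as [k [Hk Hle']].
  exists k; split; auto; lia.
Qed.

Lemma mono_anc {Q : quiver} (HM : monotonous Q) (X Y : vert Q) : ancestor Q X Y -> height_ge Q Y X.
Proof.
  intros [M [f [Hf [H0 H1]]]]. subst.
  assert (forall k, k <= M -> height_ge Q (f k) (f 0)).
  { induction k; intros Hk. apply hg_refl.
    assert (E := Hf (S k) ltac:(lia)). replace (S k - 1) with k in E by lia.
    eapply hg_trans; [apply HM; exact E| apply IHk; lia]. }
  apply H; lia.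
Qed.

Lemma iso_height {Q : quiver} (HM : monotonous Q) (X Y : vert Q) a :
  isotypic Q X Y -> has_height Q X a -> has_height Q Y a.
Proof.
  intros [H1 H2] Ha.
  destruct (mono_anc HM _ _ H2 a Ha) as [b [Hb Hba]].
  destruct (mono_anc HM _ _ H1 b Hb) as [a' [Ha' Hab]].
  assert (a' = a) by (eapply hh_uniq; eauto). subst.
  assert (a = b) by lia. subst; auto.
Qed.

Lemma univ_height {Q : quiver} (C : vert Q) l f : universal_evolution Q C l f -> has_height Q C l.
Proof.
  intros [Hf Hu]. split. exists f; auto. intros k e He. destruct (Hu k e He) as [H _]; auto.
Qed.

Lemma univ_prefix_height {Q : quiver} (C : vert Q) l f i :
  universal_evolution Q C l f -> i <= l -> has_height Q (f i) i.
Proof.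
  intros Hu Hi. pose proof (univ_height _ _ _ Hu) as HC. destruct Hu as [[Hf [Hp Hl]] _].
  split. { exists f. split; [eapply prefix_evol; eauto| split; auto]. }
  intros k e [He [Hep Hek]].
  assert (Hfull: full_evolution Q C (k + (l - i)) (cat k e (fun t => f (i+t)))).
  { split. apply cat_evol; auto. apply (shift_evol l); auto; lia. rewrite Hek; f_equal; lia.
    split. rewrite cat_0; auto. rewrite cat_hi; [| rewrite Hek; f_equal; lia | lia].
    rewrite <- Hl; f_equal; lia. }
  apply (proj2 HC) in Hfull. lia.
Qed.

Lemma strict_mono (r : nat -> nat) M : (forall k, k < M -> r k < r (S k)) ->
  forall j i, i <= j -> j <= M -> r i <= r j.
Proof.
  intros H. induction j; intros i Hi HM.
  - assert (i = 0) by lia; subst; lia.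
  - destruct (Nat.eq_dec i (S j)); [subst; lia|].
    specialize (IHj i ltac:(lia) ltac:(lia)). specialize (H j ltac:(lia)). lia.
Qed.

Lemma strict_ge (r : nat -> nat) M : (forall k, k < M -> r k < r (S k)) ->
  forall k, k <= M -> k + r 0 <= r k.
Proof.
  intros H. induction k; intros Hk. lia. specialize (IHk ltac:(lia)). specialize (H k ltac:(lia)). lia.
Qed.

Lemma key {Q : quiver} (HM : monotonous Q) (B : vert Q) n g (C : vert Q) l f j :
  universal_evolution Q B n g -> universal_evolution Q C l f -> isotypic Q C (g j) -> j <= n ->
  l = j /\ forall i, i <= l -> isotypic Q (f i) (g i).
Proof.
  intros Hg Hf Hiso Hj.
  assert (Hgj := univ_prefix_height _ _ _ _ Hg Hj).
  assert (HC := univ_height _ _ _ Hf).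
  assert (HC' : has_height Q C j) by (eapply iso_height; [eauto| apply iso_sym; eauto | eauto]).
  assert (l = j) by (eapply hh_uniq; eauto). subst l. split; auto.
  destruct Hiso as [HCg [s [q [Hq [Hq0 Hqs]]]]].
  pose proof Hg as [[Hge [Hgp Hgn]] _].
  assert (Hc : full_evolution Q C (j + s) (cat j g q)).
  { split. apply cat_evol; [eapply prefix_evol; eauto | exact Hq | congruence].
    split. rewrite cat_0; auto. rewrite cat_hi; [| congruence | lia].
    replace (j+s-j) with s by lia; auto. }
  destruct Hf as [Hff Hfu]. destruct (Hfu _ _ Hc) as [_ [r [Hr1 [Hr2 Hr3]]]].
  intros i Hi.
  assert (Hfi := univ_prefix_height C j f i (conj Hff Hfu) Hi).
  specialize (Hr3 i Hi).
  assert (Hmono: r i <= r j) by (apply (strict_mono r j); auto).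
  destruct (Nat.le_gt_cases (r i) j) as [Hle|Hgt].
  - rewrite cat_lo in Hr3 by lia.
    assert (H1 : has_height Q (g (r i)) i) by (eapply iso_height; eauto).
    assert (H2 : has_height Q (g (r i)) (r i)) by (eapply univ_prefix_height; eauto; lia).
    assert (E : r i = i) by (eapply hh_uniq; eauto). rewrite E in Hr3. exact Hr3.
  - rewrite (cat_hi j g q (r i) (eq_sym Hq0)) in Hr3 by lia.
    assert (Hqg : isotypic Q (q (r i - j)) (g j)).
    { split.
      - eapply anc_trans; [apply (anc_within s q (r i - j) s); [auto|lia]|]. rewrite Hqs; exact HCg.
      - rewrite <- Hq0. apply (anc_within s q 0); [auto|lia]. }
    assert (Hf2 := iso_trans _ _ _ Hr3 Hqg).
    assert (H1 : has_height Q (g j) i) by (eapply iso_height; eauto).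
    assert (i = j) by (eapply hh_uniq; eauto). subst. exact Hf2.
Qed.

Lemma parent_lemma {Q : quiver} (HM : monotonous Q) (B : vert Q) n g :
  universal_evolution Q B n g -> forall k j C X, j <= n -> k <= j -> isotypic Q C (g j) ->
  parent_iter Q k C X -> isotypic Q X (g (j - k)).
Proof.
  intros Hg. induction k; intros j C X Hj Hk HC HP.
  - simpl in HP. replace (j-0) with j by lia. eapply iso_trans; [apply iso_sym; eauto| auto].
  - destruct HP as [D [[l [f [Hf [Hl HD]]]] HP]].
    destruct (key HM _ _ _ _ _ _ _ Hg Hf HC Hj) as [E Hfi]. subst l.
    assert (HDg : isotypic Q D (g (j-1))) by (eapply iso_trans; [apply iso_sym; eauto| apply Hfi; lia]).
    replace (j - S k) with (j - 1 - k) by lia. apply (IHk (j-1) D X); auto; lia.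
Qed.

Lemma sig_ext (Q : quiver) (A : vert Q) (x y : vert (clade Q A)) : proj1_sig x = proj1_sig y -> x = y.
Proof. destruct x, y; simpl; intros; subst; f_equal; apply proof_irrelevance. Qed.

Lemma clade_anc_to (Q : quiver) (A : vert Q) (x y : vert (clade Q A)) :
  ancestor (clade Q A) x y -> ancestor Q (proj1_sig x) (proj1_sig y).
Proof.
  intros [M [f [Hf [H0 H1]]]]. exists M, (fun k => proj1_sig (f k)).
  split; [exact Hf | split; subst; reflexivity].
Qed.

Lemma clade_lift (Q : quiver) (A : vert Q) M (f : nat -> vert Q) :
  evolution Q M f -> ancestor Q A (f 0) ->
  exists f' : nat -> vert (clade Q A), evolution (clade Q A) M f' /\ forall k, k <= M -> proj1_sig (f' k) = f k.
Proof.
  intros Hf H0.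
  assert (Hp : forall k, ancestor Q A (f (Nat.min k M))).
  { intro k. eapply anc_trans; [exact H0| apply (anc_within M f); [auto | lia]]. }
  exists (fun k => exist _ (f (Nat.min k M)) (Hp k)). split.
  - intros k Hk. change (edge Q (f (Nat.min k M)) (f (Nat.min (k-1) M))).
    rewrite !Nat.min_l by lia. apply Hf; auto.
  - intros k Hk. simpl. rewrite Nat.min_l; auto.
Qed.

Lemma clade_anc_from (Q : quiver) (A : vert Q) (x y : vert (clade Q A)) :
  ancestor Q (proj1_sig x) (proj1_sig y) -> ancestor (clade Q A) x y.
Proof.
  intros [M [f [Hf [H0 H1]]]].
  destruct (clade_lift Q A M f Hf) as [f' [Hf' Hk]].
  { rewrite H0; exact (proj2_sig x). }
  exists M, f'. split; auto. split; apply sig_ext; rewrite Hk by lia; auto.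
Qed.

Lemma clade_iso_from (Q : quiver) (A : vert Q) (x y : vert (clade Q A)) :
  isotypic Q (proj1_sig x) (proj1_sig y) -> isotypic (clade Q A) x y.
Proof. intros [a b]; split; apply clade_anc_from; auto. Qed.

Theorem lemma9p5 (Q : quiver) (HQ : phylogenetic_quiver Q)
  (A : vert Q) (B : vert (clade Q A)) (m n : nat)
  (hA : has_height Q A m) (hB : has_height Q (proj1_sig B) n)
  (hp : parent_iter Q (n - m) (proj1_sig B) A) :
  phylogenetic_vertex (clade Q A) B /\ has_height (clade Q A) B (n - m).
Proof.
  destruct HQ as [HM Hph].
  destruct (Hph (proj1_sig B)) as [l [g Hg]].
  assert (Hl : l = n) by (eapply hh_uniq; [eapply univ_height; eauto| exact hB]). subst l.
  assert (HAb : ancestor Q A (proj1_sig B)) by exact (proj2_sig B).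
  assert (Hmn : m <= n).
  { destruct (mono_anc HM _ _ HAb n hB) as [m' [Hm' Hle]].
    assert (m' = m) by (eapply hh_uniq; eauto). lia. }
  pose proof Hg as [[Hge [Hgp Hgn]] Hgu].
  assert (HAg : isotypic Q A (g m)).
  { assert (H := parent_lemma HM (proj1_sig B) n g Hg (n - m) n (proj1_sig B) A (le_n n)
                   ltac:(lia) ltac:(rewrite Hgn; apply iso_refl) hp).
    replace (n - (n - m)) with m in H by lia. exact H. }
  assert (Hev : evolution Q (n - m) (fun k => g (m + k))) by (apply (shift_evol n); auto).
  assert (HA0 : ancestor Q A (g (m + 0))) by (rewrite Nat.add_0_r; apply HAg).
  destruct (clade_lift Q A (n-m) (fun k => g (m+k)) Hev HA0) as [h [Hh Hhk]].
  assert (HhB : h (n - m) = B).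
  { apply sig_ext. rewrite Hhk by lia. cbv beta. rewrite <- Hgn. f_equal; lia. }
  assert (Hprim : primitive (clade Q A) (h 0)).
  { intros y Hy. apply clade_anc_to in Hy. rewrite Hhk in Hy by lia. cbv beta in Hy.
    split; apply clade_anc_from; rewrite Hhk by lia; cbv beta; [exact Hy|].
    eapply anc_trans; [|exact (proj2_sig y)]. rewrite Nat.add_0_r. apply (proj2 HAg). }
  assert (Hfull : full_evolution (clade Q A) B (n - m) h) by (split; [exact Hh | split; assumption]).
  assert (Hall : forall k e, full_evolution (clade Q A) B k e -> embeds (clade Q A) (n - m) h k e).
  { intros k e [He [Hep Hek]].
    set (aA := exist (fun x => ancestor Q A x) A (anc_refl A) : vert (clade Q A)).
    assert (Hi : isotypic Q A (proj1_sig (e 0))).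
    { destruct (Hep aA (clade_anc_from _ _ aA (e 0) (proj2_sig (e 0)))) as [H1 H2].
      split; [apply clade_anc_to in H1; exact H1 | apply clade_anc_to in H2; exact H2]. }
    assert (He0h : has_height Q (proj1_sig (e 0)) m) by (eapply iso_height; eauto).
    destruct He0h as [[a [Ha [Hap Ham]]] _].
    assert (Hc : full_evolution Q (proj1_sig B) (m + k) (cat m a (fun t => proj1_sig (e t)))).
    { split. apply cat_evol; [exact Ha | exact He | exact Ham].
      split. rewrite cat_0; exact Hap.
      rewrite (cat_hi m a _ (m+k) Ham) by lia. replace (m + k - m) with k by lia.
      cbv beta. rewrite Hek; reflexivity. }
    assert (Hnk : n <= m + k) by (apply ((proj2 hB) _ _ Hc)).
    destruct (Hgu _ _ Hc) as [_ [r [Hr1 [Hr2 Hr3]]]].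
    assert (Hrge : forall i, i <= n -> i <= r i).
    { intros i Hi'. pose proof (strict_ge r n Hr1 i Hi'). lia. }
    split; [lia|].
    exists (fun i => r (m + i) - m). split; [|split].
    - intros i Hi'. cbv beta. assert (H1 := Hr1 (m+i) ltac:(lia)).
      assert (H2 := Hrge (m+i) ltac:(lia)). rewrite Nat.add_succ_r. lia.
    - cbv beta. replace (m + (n-m)) with n by lia. lia.
    - intros i Hi'. cbv beta. apply clade_iso_from. rewrite Hhk by lia. cbv beta.
      assert (H := Hr3 (m+i) ltac:(lia)). assert (H2 := Hrge (m+i) ltac:(lia)).
      rewrite (cat_hi m a _ _ Ham) in H by lia. exact H. }
  split.
  - exists (n - m), h. split; [exact Hfull | exact Hall].
  - split. exists h; exact Hfull. intros k e He. destruct (Hall k e He) as [H _]; exact H.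
Qed.
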